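(* Let $\mathcal{V}$ be a locally finite equational class. Then $\mathrm{type}(\mathsf{C}_{\mathcal{V}}(\mathbf{A}))\in\{1,\omega\}$ for each $\mathbf{A}\in\mathsf{FP}(\mathcal{V})$ with $\mathsf{C}_{\mathcal{V}}(\mathbf{A})\neq\emptyset$. Hence $\mathcal{V}$ has unitary or finitary exact type.
   Context: $\mathcal{V}$ is locally finite if every finitely generated algebra in $\mathcal{V}$ is finite. $\mathsf{FP}(\mathcal{V})$ is the class of finitely presented algebras of $\mathcal{V}$; $\mathbf{F}_{\mathcal{V}}(\omega)$ is the free algebra of $\mathcal{V}$ on countably many generators. An algebra is exact in $\mathcal{V}$ if isomorphic to a finitely generated subalgebra of $\mathbf{F}_{\mathcal{V}}(\omega)$. A coexact unifier of $\mathbf{A}$ is an onto homomorphism $u\colon\mathbf{A}\to\mathbf{E}$ with $\mathbf{E}$ exact; $u_2\le u_1$ iff $f\circ u_1=u_2$ for some homomorphism $f$ between the codomains; $\mathsf{C}_{\mathcal{V}}(\mathbf{A})$ is the set of coexact unifiers preordered by $\le$. Types of a nonempty preordered set via $\mu$-sets (complete sets of pairwise incomparable elements, complete meaning every element is below a member): $0$ none, $\infty$ infinite, $\omega$ finite of size $>1$, $1$ size $1$; ordered $1<\omega<\infty<0$. The exact type of $\mathcal{V}$ is the maximal type of $\mathsf{E}_{\mathcal{V}}(\Sigma,\mathrm{Var}(\Sigma))$ over finite $\mathcal{V}$-unifiable sets $\Sigma$ of identities, where $\mathsf{E}_{\mathcal{V}}(\Sigma,X)$ is the set of substitutions $\sigma\colon\mathbf{Fm}(X)\to\mathbf{Fm}(\omega)$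 with $\mathcal{V}\models\sigma(\varphi)\approx\sigma(\psi)$ for all $\varphi\approx\psi\in\Sigma$, preordered by $\sigma_2\sqsubseteq\sigma_1$ iff every pair of formulas over $X$ whose $\sigma_1$-images are $\mathcal{V}$-equivalent also has $\mathcal{V}$-equivalent $\sigma_2$-images. *)

(* Defs.v *)
From Stdlib Require Import List Arith ClassicalEpsilon.
From Stdlib Require Fin.
Import ListNotations.

Set Implicit Arguments.

Section UA.
Variables (Op : Type) (ar : Op -> nat).

Inductive term (X : Type) : Type :=
| var : X -> term X
| app : forall f : Op, (Fin.t (ar f) -> term X) -> term X.
Arguments var {X}.
Arguments app {X}.

Record algebra := Algebra { car :> Type; op : forall f : Op, (Fin.t (ar f) -> car) -> car }.

Fixpoint eval {X : Type} (A : algebra) (v : X -> A) (t : term X) : A :=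
  match t with
  | var x => v x
  | app f ts => @op A f (fun i => eval A v (ts i))
  end.

Fixpoint subst {X Y : Type} (s : X -> term Y) (t : term X) : term Y :=
  match t with
  | var x => s x
  | app f ts => app f (fun i => subst s (ts i))
  end.

Fixpoint occurs (x : nat) (t : term nat) : Prop :=
  match t with
  | var y => x = y
  | app f ts => exists i, occurs x (ts i)
  end.

Definition is_hom (A B : algebra) (h : A -> B) : Prop :=
  forall f (args : Fin.t (ar f) -> A), h (@op A f args) = @op B f (fun i => h (args i)).

Definition surjective {S T : Type} (h : S -> T) := forall y, exists x, h x = y.
Definition injective {S T : Type} (h : S -> T) := forall x y, h x = h y -> x = y.

Definition iso (A B : algebra) : Prop :=
  exists h : A -> B, is_hom A B h /\ injective h /\ surjective h.

Definition subuniverse (A : algebra) (U : A -> Prop) : Prop :=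
  forall f (args : Fin.t (ar f) -> A), (forall i, U (args i)) -> U (@op A f args).

Definition sub_alg (A : algebra) (U : A -> Prop) (HU : subuniverse A U) : algebra :=
  {| car := {x : A | U x};
     op := fun f args => exist _ (@op A f (fun i => proj1_sig (args i)))
                               (HU f _ (fun i => proj2_sig (args i))) |}.

Definition generates (A : algebra) (n : nat) (g : Fin.t n -> A) : Prop :=
  forall a : A, forall U, subuniverse A U -> (forall i, U (g i)) -> U a.

Definition fin_gen (A : algebra) : Prop := exists n (g : Fin.t n -> A), generates A g.

Definition finite_type (T : Type) : Prop := exists l : list T, forall x, In x l.

(** The equational class V defined by a set [Eqs] of identities in countably many variables. *)
Variable Eqs : term nat -> term nat -> Prop.

Definition in_V (A : algebra) : Prop :=
  forall s t, Eqs s t -> forall v : nat -> A, eval A v s = eval A v t.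

Definition locally_finite : Prop :=
  forall A : algebra, in_V A -> fin_gen A -> finite_type A.

Definition Veq {X : Type} (s t : term X) : Prop :=
  forall A : algebra, in_V A -> forall v : X -> A, eval A v s = eval A v t.

(** The free algebra F_V(omega): formulas over omega modulo V-equivalence. *)
Definition FV_car : Type := {P : term nat -> Prop | exists t, P = Veq t}.
Definition FV_rep (x : FV_car) : term nat :=
  proj1_sig (constructive_indefinite_description _ (proj2_sig x)).
Definition FV_cls (t : term nat) : FV_car := exist _ (Veq t) (ex_intro _ t eq_refl).
Definition FV : algebra :=
  {| car := FV_car; op := fun f args => FV_cls (app f (fun i => FV_rep (args i))) |}.

Definition exact (E : algebra) : Prop :=
  exists (U : FV -> Prop) (HU : subuniverse FV U), fin_gen (sub_alg HU) /\ iso E (sub_alg HU).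

(** Finitely presented algebras of V: algebras presented in V by finitely many
    generators and finitely many relations (universal property of <X | Sigma>). *)
Definition FP (A : algebra) : Prop :=
  in_V A /\
  exists n (g : Fin.t n -> A) (Sig : list (term (Fin.t n) * term (Fin.t n))),
    generates A g /\
    (forall p, In p Sig -> eval A g (fst p) = eval A g (snd p)) /\
    (forall (B : algebra) (b : Fin.t n -> B), in_V B ->
       (forall p, In p Sig -> eval B b (fst p) = eval B b (snd p)) ->
       exists h : A -> B, is_hom A B h /\ forall i, h (g i) = b i).

Definition coexact_unifier (A : algebra) : Type :=
  {E : algebra & {u : A -> E | is_hom A E u /\ surjective u /\ exact E}}.

Definition cu_le (A : algebra) (u2 u1 : coexact_unifier A) : Prop :=
  exists f : projT1 u1 -> projT1 u2,
    is_hom (projT1 u1) (projT1 u2) f /\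
    forall a, f (proj1_sig (projT2 u1) a) = proj1_sig (projT2 u2) a.

Definition VarS (Sig : list (term nat * term nat)) (x : nat) : Prop :=
  exists p, In p Sig /\ (occurs x (fst p) \/ occurs x (snd p)).

(** Apply a substitution sigma : Fm(X) -> Fm(omega), X a set of variables,
    to a formula (variables outside X are left untouched; only formulas over X
    are ever substituted). *)
Definition ext_sub (Xp : nat -> Prop) (s : {x : nat | Xp x} -> term nat) (x : nat) : term nat :=
  match excluded_middle_informative (Xp x) with
  | left h => s (exist _ x h)
  | right _ => var x
  end.

Definition over (Xp : nat -> Prop) (t : term nat) : Prop := forall x, occurs x t -> Xp x.

Definition exact_unifier (Sig : list (term nat * term nat)) : Type :=
  {s : {x : nat | VarS Sig x} -> term nat |
     forall p, In p Sig -> Veq (subst (@ext_sub (VarS Sig) s) (fst p)) (subst (@ext_sub (VarS Sig) s) (snd p))}.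

Definition eu_le (Sig : list (term nat * term nat)) (s2 s1 : exact_unifier Sig) : Prop :=
  forall phi psi, over (VarS Sig) phi -> over (VarS Sig) psi ->
    Veq (subst (@ext_sub (VarS Sig) (proj1_sig s1)) phi) (subst (@ext_sub (VarS Sig) (proj1_sig s1)) psi) ->
    Veq (subst (@ext_sub (VarS Sig) (proj1_sig s2)) phi) (subst (@ext_sub (VarS Sig) (proj1_sig s2)) psi).

Definition unifiable (Sig : list (term nat * term nat)) : Prop := exists s : exact_unifier Sig, True.

End UA.

Arguments var {Op ar X}.
Arguments app {Op ar X}.

Inductive utype := t1 | tomega | tinf | t0.

Definition utype_rank (t : utype) : nat :=
  match t with t1 => 0 | tomega => 1 | tinf => 2 | t0 => 3 end.

Section Types.
Variables (T : Type) (le : T -> T -> Prop).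

Definition mu_set (M : T -> Prop) : Prop :=
  (forall x y, M x -> M y -> x <> y -> ~ le x y) /\
  (forall x, exists m, M m /\ le x m).

Definition finite_set (M : T -> Prop) : Prop := exists l : list T, forall x, M x <-> In x l.

Definition has_type (t : utype) : Prop :=
  match t with
  | t1 => exists M, mu_set M /\ exists m, forall x, M x <-> x = m
  | tomega => exists M, mu_set M /\
      exists l : list T, NoDup l /\ (forall x, M x <-> In x l) /\ 1 < length l
  | tinf => exists M, mu_set M /\ ~ finite_set M
  | t0 => ~ exists M, mu_set M
  end.
End Types.

Definition exact_type (Op : Type) (ar : Op -> nat) (Eqs : term ar nat -> term ar nat -> Prop)
  (t : utype) : Prop :=
  (exists Sig, unifiable Eqs Sig /\ has_type (@eu_le Op ar Eqs Sig) t) /\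
  (forall Sig t', unifiable Eqs Sig -> has_type (@eu_le Op ar Eqs Sig) t' ->
     utype_rank t' <= utype_rank t).

(* Main.v *)
Require Import Defs.
From Stdlib Require Import List Arith Lia.
From Stdlib Require Import ClassicalEpsilon Classical FunctionalExtensionality PropExtensionality ProofIrrelevance.
Import ListNotations.

Definition decb (Q : Prop) : bool := if excluded_middle_informative Q then true else false.
Lemma decb_true Q : decb Q = true <-> Q.
Proof. unfold decb; destruct (excluded_middle_informative Q); split; intros; auto; discriminate. Qed.

Lemma filter_le {A} (l : list A) (p q : A -> bool) :
  (forall a, In a l -> q a = true -> p a = true) ->
  length (filter q l) <= length (filter p l).
Proof.
  induction l as [|a l IH]; simpl; intros H; auto.
  assert (IH' := IH (fun b Hb => H b (or_intror Hb))).
  specialize (H a (or_introl eq_refl)).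
  destruct (q a), (p a); simpl; try lia; discriminate (H eq_refl).
Qed.

Lemma filter_lt {A} (l : list A) (p q : A -> bool) :
  (forall a, In a l -> q a = true -> p a = true) ->
  (exists a, In a l /\ p a = true /\ q a = false) ->
  length (filter q l) < length (filter p l).
Proof.
  induction l as [|a l IH]; simpl; intros H [b [Hb [Hp Hq]]]; [contradiction|].
  assert (H' : forall c, In c l -> q c = true -> p c = true) by (intros; apply H; auto).
  destruct Hb as [<-|Hb].
  - rewrite Hp, Hq. simpl. pose proof (filter_le l p q H'). lia.
  - assert (IH' := IH H' (ex_intro _ b (conj Hb (conj Hp Hq)))).
    specialize (H a (or_introl eq_refl)).
    destruct (q a), (p a); simpl; try lia; discriminate (H eq_refl).
Qed.

Fixpoint allb (k : nat) : list (list bool) :=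
  match k with 0 => [[]] | S k => map (cons true) (allb k) ++ map (cons false) (allb k) end.
Lemma allb_in b : In b (allb (length b)).
Proof. induction b as [|x b IH]; simpl; auto. apply in_or_app. destruct x; [left|right]; apply in_map; auto. Qed.

Lemma map_eq_in {A B} (f g : A -> B) l : map f l = map g l -> forall a, In a l -> f a = g a.
Proof. induction l; simpl; intros H b Hb; [contradiction|]. injection H as H1 H2. destruct Hb as [<-|Hb]; auto. Qed.

Definition olist {A} (o : option A) : list A := match o with Some x => [x] | None => [] end.

Section Kernel.
Variables (T P : Type) (le : T -> T -> Prop) (L : list P) (R : T -> P -> P -> Prop).
Hypothesis H : forall x y, le y x <-> (forall p q, In p L -> In q L -> R x p q -> R y p q).

Lemma k_refl x : le x x. Proof. apply H; auto. Qed.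
Lemma k_trans x y z : le x y -> le y z -> le x z.
Proof. intros A B. apply H. intros p q Hp Hq Hr. apply (proj1 (H y x) A p q Hp Hq), (proj1 (H z y) B p q Hp Hq), Hr. Qed.

Definition kdec (x : T) (a : P * P) : bool := decb (R x (fst a) (snd a)).
Definition kv (x : T) : list bool := map (kdec x) (list_prod L L).
Definition maxl x := forall y, le x y -> le y x.

Lemma exists_max : forall k x, length (filter (kdec x) (list_prod L L)) < k -> exists m, maxl m /\ le x m.
Proof.
  induction k; intros x Hk; [lia|].
  destruct (classic (maxl x)) as [Hm|Hm]; [exists x; split; auto; apply k_refl|].
  apply not_all_ex_not in Hm as [y Hy]. apply imply_to_and in Hy as [Hxy Hyx].
  assert (Hc : length (filter (kdec y) (list_prod L L)) < length (filter (kdec x) (list_prod L L))).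
  { apply filter_lt.
    - intros [p q] Hpq Hy. apply in_prod_iff in Hpq as [Hp Hq]. unfold kdec in *; simpl in *.
      apply (proj1 (decb_true _)) in Hy. apply decb_true. exact (proj1 (H y x) Hxy p q Hp Hq Hy).
    - destruct (classic (exists p q, In p L /\ In q L /\ R x p q /\ ~ R y p q)) as [[p [q [Hp [Hq [H1 H2]]]]]|Hn].
      + exists (p, q). split; [apply in_prod; auto|]. unfold kdec; simpl. split; [apply decb_true; auto|].
        unfold decb; destruct excluded_middle_informative; tauto.
      + exfalso; apply Hyx, H. intros p q Hp Hq Hr. apply NNPP; intro. apply Hn; eauto 7. }
  destruct (IHk y) as [m [Hm Hym]]; [lia|]. exists m; split; auto. eapply k_trans; eauto.
Qed.

Definition pick (b : list bool) : option T :=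
  match excluded_middle_informative (exists x, maxl x /\ kv x = b) with
  | left E => Some (proj1_sig (constructive_indefinite_description _ E))
  | right _ => None end.

Lemma pick_spec b x : pick b = Some x -> maxl x /\ kv x = b.
Proof. unfold pick; destruct excluded_middle_informative as [E|]; [|discriminate].
  intro Hs; injection Hs as <-. exact (proj2_sig (constructive_indefinite_description _ E)). Qed.

Lemma kv_le x y : kv x = kv y -> le x y.
Proof. intro E. apply H. intros p q Hp Hq Hr.
  pose proof (map_eq_in _ _ _ E (p,q) (in_prod _ _ _ _ Hp Hq)) as E'. unfold kdec in E'; simpl in E'.
  apply (proj1 (decb_true _)). rewrite E'. apply (proj2 (decb_true _)); auto. Qed.

Lemma le_kv x y : le x y -> le y x -> kv x = kv y.
Proof. intros A B. unfold kv. apply map_ext_in. intros [p q] Hpq. apply in_prod_iff in Hpq as [Hp Hq].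
  unfold kdec, decb; simpl. destruct excluded_middle_informative as [X|X], excluded_middle_informative as [Y|Y]; auto.
  - exfalso; apply Y. exact (proj1 (H x y) B p q Hp Hq X).
  - exfalso; apply X. exact (proj1 (H y x) A p q Hp Hq Y). Qed.

Definition klist : list T := nodup (fun x y => excluded_middle_informative (x = y))
  (flat_map (fun b => olist (pick b)) (allb (length (list_prod L L)))).

Lemma klist_in x : In x klist <-> exists b, pick b = Some x.
Proof. unfold klist. rewrite nodup_In, in_flat_map. split.
  - intros [b [_ Hb]]. exists b. destruct (pick b); simpl in Hb; [destruct Hb as [<-|[]]; auto|contradiction].
  - intros [b Hb]. exists b. split; [|rewrite Hb; simpl; auto].
    apply pick_spec in Hb as [_ <-]. unfold kv. rewrite <- (length_map (kdec x)). apply allb_in. Qed.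

Lemma kernel_mu : exists l : list T, NoDup l /\ mu_set le (fun x => In x l).
Proof.
  exists klist. split; [apply NoDup_nodup|split].
  - intros x y Hx Hy Hne Hxy. apply klist_in in Hx as [b Hb], Hy as [c Hc].
    apply Hne. destruct (pick_spec _ _ Hb) as [Mx Ex]. destruct (pick_spec _ _ Hc) as [My Ey].
    assert (kv x = kv y) by (apply le_kv; auto). congruence.
  - intro x. destruct (exists_max (S (length (filter (kdec x) (list_prod L L)))) x) as [m [Mm Hxm]]; [lia|].
    destruct (pick (kv m)) as [m'|] eqn:E.
    + exists m'. split; [apply klist_in; eauto|]. apply pick_spec in E as [_ E].
      eapply k_trans; [exact Hxm|]. apply kv_le; auto.
    + exfalso. unfold pick in E. destruct excluded_middle_informative as [|N]; [discriminate|]. eauto.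
Qed.
End Kernel.

Section Types.
Variables (T : Type) (le : T -> T -> Prop).

Lemma types_fin (x0 : T) (l : list T) : NoDup l -> mu_set le (fun x => In x l) ->
  has_type le t1 \/ has_type le tomega.
Proof.
  intros Nd Mu. destruct l as [|m [|m2 l]].
  - destruct (proj2 Mu x0) as [? [[] _]].
  - left. exists (fun x => In x [m]). split; auto. exists m. intro x; simpl; split; [intros [<-|[]]; auto|auto].
  - right. exists (fun x => In x (m :: m2 :: l)). split; auto. exists (m :: m2 :: l). simpl; repeat split; auto; lia.
Qed.

Hypothesis trans : forall x y z, le x y -> le y z -> le x z.

Lemma types_no_inf (l : list T) : mu_set le (fun x => In x l) ->
  ~ has_type le tinf /\ ~ has_type le t0.
Proof.
  intros Mu. split; [|simpl; eauto].
  intros [M [MuM Hinf]]. apply Hinf.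
  set (f := fun m1 => match excluded_middle_informative (exists y, M y /\ le m1 y /\ le y m1) with
     | left E => Some (proj1_sig (constructive_indefinite_description _ E)) | right _ => None end).
  exists (flat_map (fun m1 => olist (f m1)) l). intro x. rewrite in_flat_map. split.
  - intro Mx. destruct (proj2 Mu x) as [m1 [Hm1 Hxm1]]. destruct (proj2 MuM m1) as [y [My Hm1y]].
    assert (Exy : x = y). { apply NNPP; intro Ne. apply (proj1 MuM x y Mx My Ne). eauto. }
    subst y. exists m1; split; auto. unfold f. destruct excluded_middle_informative as [E|N]; [|exfalso; eauto].
    destruct (proj2_sig (constructive_indefinite_description _ E)) as [Mz [H1 H2]].
    simpl. left. apply NNPP; intro Ne. apply (proj1 MuM x _ Mx Mz (fun e => Ne (eq_sym e))). eauto.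
  - intros [m1 [_ Hx]]. unfold f in Hx. destruct excluded_middle_informative as [E|]; [|contradiction].
    simpl in Hx. destruct Hx as [<-|[]]. apply (proj2_sig (constructive_indefinite_description _ E)).
Qed.
End Types.
Section UA2.
Variables (Op : Type) (ar : Op -> nat) (Eqs : term ar nat -> term ar nat -> Prop).

Lemma eval_subst {Y Z : Type} (A : algebra ar) (v : Z -> A) (s : Y -> term ar Z) (t : term ar Y) :
  eval A v (subst s t) = eval A (fun x => eval A v (s x)) t.
Proof. induction t as [x|f ts IH]; simpl; auto. f_equal. apply functional_extensionality; auto. Qed.

Lemma Veq_refl {Y} (t : term ar Y) : Veq Eqs t t. Proof. intros A _ v; auto. Qed.
Lemma Veq_sym {Y} (s t : term ar Y) : Veq Eqs s t -> Veq Eqs t s. Proof. intros H A HA v; symmetry; auto. Qed.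
Lemma Veq_trans {Y} (s t u : term ar Y) : Veq Eqs s t -> Veq Eqs t u -> Veq Eqs s u.
Proof. intros H1 H2 A HA v; rewrite (H1 A HA v); auto. Qed.
Lemma Veq_subst {Y Z} (s t : term ar Y) (sg : Y -> term ar Z) : Veq Eqs s t -> Veq Eqs (subst sg s) (subst sg t).
Proof. intros H A HA v. rewrite !eval_subst. auto. Qed.
Lemma Veq_app {Y} f (a b : Fin.t (ar f) -> term ar Y) : (forall i, Veq Eqs (a i) (b i)) -> Veq Eqs (Defs.app f a) (Defs.app f b).
Proof. intros H A HA v; simpl. f_equal. apply functional_extensionality; intro i; apply H; auto. Qed.
Lemma Veq_pred (s t : term ar nat) : Veq Eqs s t -> Veq Eqs s = Veq Eqs t.
Proof. intro H. apply functional_extensionality; intro u. apply propositional_extensionality.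
  split; intro; [eapply Veq_trans; [apply Veq_sym|]; eauto| eapply Veq_trans; eauto]. Qed.
Lemma pred_Veq (s t : term ar nat) : Veq Eqs s = Veq Eqs t -> Veq Eqs s t.
Proof. intro H. rewrite H. apply Veq_refl. Qed.

Lemma cu_le_iff (A : algebra ar) (u1 u2 : coexact_unifier Eqs A) :
  cu_le u2 u1 <-> forall a b, proj1_sig (projT2 u1) a = proj1_sig (projT2 u1) b ->
                              proj1_sig (projT2 u2) a = proj1_sig (projT2 u2) b.
Proof.
  destruct u1 as [E1 [u1 [Hh1 [Hs1 Ex1]]]], u2 as [E2 [u2 [Hh2 [Hs2 Ex2]]]]; unfold cu_le; simpl. split.
  - intros [f [_ Hf]] a b E. rewrite <- !Hf, E. auto.
  - intro K.
    set (pre := fun e => proj1_sig (constructive_indefinite_description _ (Hs1 e))).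
    assert (Hpre : forall e, u1 (pre e) = e) by (intro e; exact (proj2_sig (constructive_indefinite_description _ (Hs1 e)))).
    exists (fun e => u2 (pre e)). split.
    + intros f args. rewrite <- Hh2. apply K. rewrite Hh1, Hpre. f_equal.
      apply functional_extensionality; intro i; rewrite Hpre; auto.
    + intro a. apply K. apply Hpre.
Qed.

Hypothesis HV : locally_finite Eqs.

Lemma part1 (A : algebra ar) : FP Eqs A -> (exists u : coexact_unifier Eqs A, True) ->
  has_type (cu_le (Eqs:=Eqs) (A:=A)) t1 \/ has_type (cu_le (Eqs:=Eqs) (A:=A)) tomega.
Proof.
  intros [HA [n [g [Sig [Hg _]]]]] [u0 _].
  destruct (HV A HA (ex_intro _ n (ex_intro _ g Hg))) as [L HL].
  destruct (@kernel_mu _ _ (cu_le (Eqs:=Eqs) (A:=A)) L (fun u a b => proj1_sig (projT2 u) a = proj1_sig (projT2 u) b)) as [l [Nd Mu]].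
  { intros x y. rewrite cu_le_iff. split; intros; auto. }
  eapply types_fin; eauto.
Qed.

Section FX.
Variable X : nat -> Prop.

Lemma over_app f (ts : Fin.t (ar f) -> term ar nat) : (forall i, over X (ts i)) -> over X (Defs.app f ts).
Proof. intros H x [i Hi]. exact (H i x Hi). Qed.
Lemma over_app_inv f (ts : Fin.t (ar f) -> term ar nat) : over X (Defs.app f ts) -> forall i, over X (ts i).
Proof. intros H i x Hi. apply H. exists i; auto. Qed.
Lemma over_subst (sg : nat -> term ar nat) t : (forall x, over X (sg x)) -> over X (subst sg t).
Proof. intro H. induction t as [x|f ts IH]; simpl; auto. apply over_app; auto. Qed.

Definition FX_car := {Pr : term ar nat -> Prop | exists t, over X t /\ Pr = Veq Eqs t}.
Definition FX_rep (c : FX_car) : term ar nat := proj1_sig (constructive_indefinite_description _ (proj2_sig c)).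
Lemma FX_rep_spec c : over X (FX_rep c) /\ proj1_sig c = Veq Eqs (FX_rep c).
Proof. exact (proj2_sig (constructive_indefinite_description _ (proj2_sig c))). Qed.
Definition FX_cls (t : term ar nat) (Ht : over X t) : FX_car := exist _ (Veq Eqs t) (ex_intro _ t (conj Ht eq_refl)).
Arguments FX_cls {t} Ht.
Lemma FX_eq (c d : FX_car) : proj1_sig c = proj1_sig d -> c = d.
Proof. destruct c, d; simpl; intro; subst; f_equal; apply proof_irrelevance. Qed.

Definition FX : algebra ar := {| car := FX_car;
  op := fun f args => FX_cls (over_app f _ (fun i => proj1 (FX_rep_spec (args i)))) |}.

Lemma FX_eval (v : nat -> FX) s : proj1_sig (eval FX v s) = Veq Eqs (subst (fun x => FX_rep (v x)) s).
Proof.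
  induction s as [x|f ts IH]; simpl.
  - apply FX_rep_spec.
  - apply Veq_pred, Veq_app. intro i. apply pred_Veq. rewrite <- IH. symmetry. apply FX_rep_spec.
Qed.

Lemma FX_inV : in_V Eqs FX.
Proof.
  intros s t Hst v. apply FX_eq. rewrite !FX_eval. apply Veq_pred.
  intros B HB w. rewrite !eval_subst. apply HB; auto.
Qed.

Variable xs : list nat.
Hypothesis Hxs : forall x, X x <-> In x xs.

Lemma over_gen (i : Fin.t (length xs)) : over (ar:=ar) X (var (nth (proj1_sig (Fin.to_nat i)) xs 0)).
Proof. intros x Hx. simpl in Hx. subst. apply Hxs, nth_In, (proj2_sig (Fin.to_nat i)). Qed.

Definition gen (i : Fin.t (length xs)) : FX := FX_cls (over_gen i).

Lemma FX_gen : generates FX gen.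
Proof.
  intros a U HU Hg.
  assert (K : forall t (Ht : over X t), U (FX_cls Ht)).
  { induction t as [x|f ts IH]; intro Ht.
    - assert (Xx : X x) by (apply Ht; simpl; auto).
      apply Hxs in Xx. destruct (In_nth xs x 0 Xx) as [k [Hk Hn]].
      replace (FX_cls Ht) with (gen (Fin.of_nat_lt Hk)); [apply Hg|].
      apply FX_eq. simpl. rewrite Fin.to_nat_of_nat. simpl. rewrite Hn. auto.
    - replace (FX_cls Ht) with (op FX f (fun i => FX_cls (over_app_inv f ts Ht i))).
      + apply HU. intro i; apply IH.
      + apply FX_eq. simpl. apply Veq_pred, Veq_app. intro i. apply pred_Veq. symmetry.
        exact (proj2 (FX_rep_spec (FX_cls (over_app_inv f ts Ht i)))). }
  replace a with (FX_cls (proj1 (FX_rep_spec a))); [apply K|].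
  apply FX_eq. simpl. symmetry. apply FX_rep_spec.
Qed.

Lemma fin_reps : exists reps : list (term ar nat), (forall r, In r reps -> over X r) /\
  forall t, over X t -> exists r, In r reps /\ Veq Eqs t r.
Proof.
  destruct (HV FX FX_inV (ex_intro _ _ (ex_intro _ gen FX_gen))) as [lF HF].
  exists (map FX_rep lF). split.
  - intros r Hr. apply in_map_iff in Hr as [c [<- _]]. apply FX_rep_spec.
  - intros t Ht. exists (FX_rep (FX_cls Ht)). split; [apply in_map; auto|].
    apply pred_Veq. exact (proj2 (FX_rep_spec (FX_cls Ht))).
Qed.
End FX.

Fixpoint fin_list (n : nat) : list (Fin.t n) :=
  match n with 0 => [] | S n => Fin.F1 :: map Fin.FS (fin_list n) end.
Lemma fin_list_in n (i : Fin.t n) : In i (fin_list n).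
Proof. induction i; simpl; auto. right. apply in_map; auto. Qed.

Fixpoint vars (t : term ar nat) : list nat :=
  match t with var x => [x] | Defs.app f ts => flat_map (fun i => vars (ts i)) (fin_list (ar f)) end.
Lemma vars_occ x t : occurs x t <-> In x (vars t).
Proof.
  induction t as [y|f ts IH]; simpl. { split; [intros ->; auto|intros [->|[]]; auto]. }
  rewrite in_flat_map. split.
  - intros [i Hi]. exists i. split; [apply fin_list_in|apply IH; auto].
  - intros [i [_ Hi]]. exists i. apply IH; auto.
Qed.

Lemma VarS_fin (Sig : list (term ar nat * term ar nat)) : exists xs, forall x, VarS Sig x <-> In x xs.
Proof.
  exists (flat_map (fun p => vars (fst p) ++ vars (snd p)) Sig). intro x. unfold VarS. rewrite in_flat_map.
  split; intros [p [Hp Ho]]; exists p; split; auto; rewrite in_app_iff in *; rewrite !vars_occ in *; auto.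
Qed.

Lemma eu_trans (Sig : list (term ar nat * term ar nat)) (x y z : exact_unifier Eqs Sig) : eu_le x y -> eu_le y z -> eu_le x z.
Proof. unfold eu_le. intros H1 H2 phi psi Hp Hq E. apply H1; auto. Qed.

Lemma part2 (Sig : list (term ar nat * term ar nat)) : exists l : list (exact_unifier Eqs Sig), NoDup l /\ mu_set (eu_le (Eqs:=Eqs) (Sig:=Sig)) (fun x => In x l).
Proof.
  destruct (VarS_fin Sig) as [xs Hxs].
  destruct (fin_reps (VarS Sig) xs Hxs) as [reps [Hr Hc]].
  set (sb := fun (s : exact_unifier Eqs Sig) => ext_sub (VarS Sig) (proj1_sig s)).
  apply (@kernel_mu _ _ (eu_le (Eqs:=Eqs) (Sig:=Sig)) reps (fun s p q => Veq Eqs (subst (sb s) p) (subst (sb s) q))).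
  intros x y. unfold eu_le. split.
  - intros H p q Hp Hq. apply H; auto.
  - intros H phi psi Hp Hq E.
    destruct (Hc _ Hp) as [r [Ir Er]], (Hc _ Hq) as [r' [Ir' Er']].
    assert (K : Veq Eqs (subst (sb y) r) (subst (sb y) r')).
    { apply H; auto. fold (sb x) in E. eapply Veq_trans; [apply Veq_sym, Veq_subst, Er|].
      eapply Veq_trans; [exact E|apply Veq_subst, Er']. }
    fold (sb y). eapply Veq_trans; [apply Veq_subst, Er|]. eapply Veq_trans; [exact K|apply Veq_sym, Veq_subst, Er'].
Qed.

End UA2.

Theorem corollary3p8 (Op : Type) (ar : Op -> nat)
  (Eqs : term ar nat -> term ar nat -> Prop)
  (HV : locally_finite Eqs) :
  (forall A : algebra ar, FP Eqs A ->
     (exists u : coexact_unifier Eqs A, True) ->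
     has_type (cu_le (Eqs:=Eqs) (A:=A)) t1 \/ has_type (cu_le (Eqs:=Eqs) (A:=A)) tomega) /\
  (exact_type Eqs t1 \/ exact_type Eqs tomega).
Proof.
  split; [intros; apply part1; auto|].
  assert (Fin : forall Sig t', has_type (@eu_le Op ar Eqs Sig) t' -> utype_rank t' <= 1).
  { intros Sig t' Ht. destruct (@part2 Op ar Eqs HV Sig) as [l [_ Mu]].
    destruct (@types_no_inf _ _ (@eu_trans Op ar Eqs Sig) l Mu) as [N1 N2].
    destruct t'; simpl; auto; contradiction. }
  assert (U0 : unifiable Eqs (@nil (term ar nat * term ar nat))).
  { unfold unifiable. unshelve eexists; [|exact I].
    exists (fun x => var (proj1_sig x)). intros p []. }
  destruct (classic (exists Sig, unifiable Eqs Sig /\ has_type (@eu_le Op ar Eqs Sig) tomega)) as [Ho|Hno].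
  - right. split; auto. intros Sig t' _ Ht. exact (Fin Sig t' Ht).
  - left. split.
    + exists nil. split; auto. pose proof U0 as [s0 _]. destruct (@part2 Op ar Eqs HV nil) as [l [Nd Mu]].
      destruct (@types_fin _ _ s0 l Nd Mu) as [|Ht]; auto. exfalso; apply Hno; exists nil; split; auto.
    + intros Sig t' HU Ht. pose proof (Fin Sig t' Ht). destruct t'; simpl in *; try lia.
      exfalso; apply Hno; eauto.
Qed.
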